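(* Under the standing setting described in the context (in particular, $\mathcal{A}$ is a nonempty compact controlled invariant set satisfying the local $\ell_p$-stabilizability assumption, and $\alpha$ satisfies the stated bounds with $\bar p\ge p$), define $\mathbb{V}_{\infty}:=\{x\in\mathbb{R}^n : \mathcal{V}(\{x\})<\infty\}$ and $\mathbb{W}_{1}:=\{x\in\mathbb{R}^n : \mathcal{W}(\{x\})<1\}$. Then $\mathbb{V}_{\infty}=\mathbb{W}_{1}=\mathcal{D}_{\mathcal{A}}$.
   Context: Let $\|\cdot\|$ be a norm on $\mathbb{R}^n$ and $\mathrm{dist}(x,\Omega):=\inf_{y\in\Omega}\|x-y\|$. Let $\mathcal{K}(\mathbb{R}^n)$ denote the nonempty compact subsets of $\mathbb{R}^n$. Consider the discrete-time system $x_{k+1}=f(x_k,u_k)$, $k\in\mathbb{Z}_+$, where $f:\mathbb{R}^n\times\mathbb{R}^m\to\mathbb{R}^n$ is continuous and the inputs satisfy $u_k\in U$ for a nonempty compact $U\subset\mathbb{R}^m$. For $x\in\mathbb{R}^n$ and an input signal $\pi:\mathbb{Z}_+\to U$, the trajectory $\varphi_x^\pi$ is defined by $\varphi_x^\pi(0)=x$, $\varphi_x^\pi(k+1)=f(\varphi_x^\pi(k),\pi(k))$. For $X\subseteq\mathbb{R}^n$ and $k\in\mathbb{Z}_+$, the reachable set is $\mathcal{R}(X,k):=\{\varphi_x^\pi(k): x\in X,\ \pi\in U^{\mathbb{Z}_+}\}$. Let $\mathcal{A}\in\mathcal{K}(\mathbb{R}^n)$ be controlled invariant: for every $x\in\mathcal{A}$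 there is $u\in U$ with $f(x,u)\in\mathcal{A}$. Assume local $\ell_p$-stabilizability: there exist $r>0$, $M\ge1$, $p>0$ and $\lambda:[0,r]\times\mathbb{Z}_+\to\mathbb{R}_+$ such that (1) for each $k$, $s\mapsto\lambda(s,k)$ is continuous, nondecreasing, $\lambda(0,k)=0$; for each $s$, $k\mapsto\lambda(s,k)$ is nonincreasing and $\lambda(s,0)\le s$; (2) $\sum_{k=0}^\infty\lambda(r,k)^p<\infty$; (3) for every $x$ with $\mathrm{dist}(x,\mathcal{A})\le r$ there exists $\pi\in U^{\mathbb{Z}_+}$ with $\mathrm{dist}(\varphi_x^\pi(k),\mathcal{A})\le M\lambda(\mathrm{dist}(x,\mathcal{A}),k)$ for all $k\in\mathbb{Z}_+$. The domain of stabilization is $\mathcal{D}_{\mathcal{A}}:=\{x\in\mathbb{R}^n:\exists\pi\in U^{\mathbb{Z}_+}\text{ with }\lim_{k\to\infty}\mathrm{dist}(\varphi_x^\pi(k),\mathcal{A})=0\}$. Let $\alpha:\mathbb{R}^n\to\mathbb{R}_+$ be continuous with $\underline{\alpha}\,\mathrm{dist}(x,\mathcal{A})^{\bar p}\le\alpha(x)\le\overline{\alpha}\,\mathrm{dist}(x,\mathcal{A})^{\bar p}$ for all $x$, for some constants $\underline{\alpha},\overline{\alpha}>0$ and $\bar p\ge p$. Define $\Psi(X):=\inf_{y\in X}\alpha(y)$ for $X\in\mathcal{K}(\mathbb{R}^n)$, $\mathcal{V}(X):=\sum_{k=0}^\infty\Psi(\mathcal{R}(X,k))\in[0,\infty]$,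 and $\mathcal{W}(X):=1-\exp(-\mathcal{V}(X))$ with the convention $\exp(-\infty)=0$. *)

(* Defs.v *)
From HB Require Import structures.
From mathcomp Require Import all_boot all_order all_algebra.
From mathcomp Require Import all_classical all_reals all_analysis.
Set Implicit Arguments. Unset Strict Implicit. Unset Printing Implicit Defensive.
Import Order.TTheory GRing.Theory Num.Theory.
Import numFieldNormedType.Exports.
Local Open Scope ring_scope.
Local Open Scope classical_set_scope.

Definition is_norm {R : realType} {n : nat} (N : 'rV[R]_n -> R) : Prop :=
  [/\ (forall x, 0 <= N x), (forall x, N x = 0 -> x = 0),
      (forall (a : R) x, N (a *: x) = `|a| * N x) &
      (forall x y, N (x + y) <= N x + N y)].

Definition setdist {R : realType} {n : nat} (N : 'rV[R]_n -> R)
  (x : 'rV[R]_n) (Om : set 'rV[R]_n) : R :=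
  inf [set N (x - y) | y in Om].

Fixpoint traj {R : realType} {n m : nat} (f : 'rV[R]_n -> 'rV[R]_m -> 'rV[R]_n)
  (x : 'rV[R]_n) (pi : nat -> 'rV[R]_m) (k : nat) : 'rV[R]_n :=
  match k with
  | 0 => x
  | k'.+1 => f (traj f x pi k') (pi k')
  end.

Definition admissible {R : realType} {m : nat} (U : set 'rV[R]_m)
  (pi : nat -> 'rV[R]_m) : Prop := forall k, U (pi k).

Definition reach {R : realType} {n m : nat} (f : 'rV[R]_n -> 'rV[R]_m -> 'rV[R]_n)
  (U : set 'rV[R]_m) (X : set 'rV[R]_n) (k : nat) : set 'rV[R]_n :=
  [set y | exists x pi, [/\ X x, admissible U pi & y = traj f x pi k]].

Definition Psi {R : realType} {n : nat} (alpha : 'rV[R]_n -> R)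
  (X : set 'rV[R]_n) : R := inf [set alpha y | y in X].

Definition Vfun {R : realType} {n m : nat} (f : 'rV[R]_n -> 'rV[R]_m -> 'rV[R]_n)
  (U : set 'rV[R]_m) (alpha : 'rV[R]_n -> R) (X : set 'rV[R]_n) : \bar R :=
  (\sum_(0 <= k <oo) (Psi alpha (reach f U X k))%:E)%E.

(* W(X) := 1 - exp(-V(X)), with exp(-oo) = 0 *)
Definition Wfun {R : realType} {n m : nat} (f : 'rV[R]_n -> 'rV[R]_m -> 'rV[R]_n)
  (U : set 'rV[R]_m) (alpha : 'rV[R]_n -> R) (X : set 'rV[R]_n) : \bar R :=
  (1 - expeR (- Vfun f U alpha X))%E.

Definition stab_domain {R : realType} {n m : nat} (N : 'rV[R]_n -> R)
  (f : 'rV[R]_n -> 'rV[R]_m -> 'rV[R]_n) (U : set 'rV[R]_m) (A : set 'rV[R]_n)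
  : set 'rV[R]_n :=
  [set x | exists pi, admissible U pi /\
     (setdist N (traj f x pi k) A @[k --> \oo] --> (0 : R))].

Definition V_infty {R : realType} {n m : nat} (f : 'rV[R]_n -> 'rV[R]_m -> 'rV[R]_n)
  (U : set 'rV[R]_m) (alpha : 'rV[R]_n -> R) : set 'rV[R]_n :=
  [set x | (Vfun f U alpha [set x] < +oo)%E].

Definition W_1 {R : realType} {n m : nat} (f : 'rV[R]_n -> 'rV[R]_m -> 'rV[R]_n)
  (U : set 'rV[R]_m) (alpha : 'rV[R]_n -> R) : set 'rV[R]_n :=
  [set x | (Wfun f U alpha [set x] < 1)%E].

(* Main.v *)
Require Import Defs.
From HB Require Import structures.
From mathcomp Require Import all_boot all_order all_algebra.
From mathcomp Require Import all_classical all_reals all_analysis.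
Import Order.TTheory GRing.Theory Num.Theory.
Import numFieldNormedType.Exports.
Local Open Scope ring_scope.
Local Open Scope classical_set_scope.

Definition catpi {R : realType} {m : nat} (pi pi' : nat -> 'rV[R]_m) (K : nat) :=
  fun k => if (k < K)%N then pi k else pi' (k - K)%N.

Lemma traj_cat_le {R : realType} {n m : nat} (f : 'rV[R]_n -> 'rV[R]_m -> 'rV[R]_n)
  x pi pi' K k : (k <= K)%N -> traj f x (catpi pi pi' K) k = traj f x pi k.
Proof.
elim: k => [//|k IH] hk /=.
by rewrite IH ?(ltnW hk) // /catpi hk.
Qed.

Lemma traj_cat {R : realType} {n m : nat} (f : 'rV[R]_n -> 'rV[R]_m -> 'rV[R]_n)
  x pi pi' K j : traj f x (catpi pi pi' K) (K + j) = traj f (traj f x pi K) pi' j.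
Proof.
elim: j => [|j IH]; first by rewrite addn0 traj_cat_le.
rewrite addnS /= IH /catpi ltnNge leq_addr /=.
by rewrite addKn.
Qed.

Lemma catpi_adm {R : realType} {m : nat} (U : set 'rV[R]_m) pi pi' K :
  admissible U pi -> admissible U pi' -> admissible U (catpi pi pi' K).
Proof. by move=> h1 h2 k; rewrite /catpi; case: ifP. Qed.

Lemma setdist_ge0 {R : realType} {n : nat} (N : 'rV[R]_n -> R) x (A : set 'rV[R]_n) :
  (forall z, 0 <= N z) -> A !=set0 -> 0 <= setdist N x A.
Proof.
move=> N0 [a Aa]; apply: lb_le_inf; first by exists (N (x - a)), a.
by move=> _ [y _ <-].
Qed.

Lemma Psi_le {R : realType} {n : nat} (alpha : 'rV[R]_n -> R) (X : set 'rV[R]_n) y :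
  (forall z, 0 <= alpha z) -> X y -> Psi alpha X <= alpha y.
Proof.
move=> a0 Xy; apply: ge_inf; last by exists y.
by exists 0 => _ [z _ <-].
Qed.

Lemma Psi_ge0 {R : realType} {n : nat} (alpha : 'rV[R]_n -> R) (X : set 'rV[R]_n) :
  (forall z, 0 <= alpha z) -> X !=set0 -> 0 <= Psi alpha X.
Proof.
move=> a0 [y Xy]; apply: lb_le_inf; first by exists (alpha y), y.
by move=> _ [z _ <-].
Qed.

Lemma term0 {R : realType} (a : nat -> R) :
  (forall k, 0 <= a k) -> (\sum_(0 <= k <oo) (a k)%:E < +oo)%E -> a @ \oo --> 0.
Proof.
move=> a0 h; apply: cvg_series_cvg_0; exact: nnseries_is_cvg.
Qed.

Lemma pow_cvg0 {R : realType} (a : nat -> R) (p : R) :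
  (forall j, 0 <= a j) -> 0 < p -> (fun j => a j `^ p) @ \oo --> 0 -> a @ \oo --> 0.
Proof.
move=> a0 p0 H; apply/cvgrPdist_lt => e e0.
move/cvgrPdist_lt : H => /(_ (e `^ p) (powR_gt0 _ e0)).
apply: filterS => j; rewrite !sub0r !normrN !ger0_norm ?powR_ge0 // => h.
rewrite ltNge; apply/negP => ej.
have := ge0_ler_powR (ltW p0) _ _ ej.
rewrite !nnegrE (ltW e0) a0 => /(_ isT isT).
by rewrite leNgt h.
Qed.

Lemma pow_le_small {R : realType} (x p q : R) :
  0 <= x -> x <= 1 -> 0 < p -> p <= q -> x `^ q <= x `^ p.
Proof.
move=> x0 x1 p0 pq; have [->|xn0] := eqVneq x 0.
  by rewrite !powR0 ?gt_eqF // (lt_le_trans p0 pq).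
apply: ger_powR => //; rewrite x1 andbT lt_neqAle eq_sym xn0 x0 //.
Qed.

Lemma reach_ne {R : realType} {n m : nat} (f : 'rV[R]_n -> 'rV[R]_m -> 'rV[R]_n)
  (U : set 'rV[R]_m) x k : U !=set0 -> reach f U [set x] k !=set0.
Proof.
move=> [u Uu]; exists (traj f x (fun=> u) k), x, (fun=> u); split => //.
Qed.

Lemma V_ge0 {R : realType} {n m : nat} (f : 'rV[R]_n -> 'rV[R]_m -> 'rV[R]_n)
  (U : set 'rV[R]_m) alpha x : U !=set0 -> (forall z, 0 <= alpha z) ->
  (0 <= Vfun f U alpha [set x])%E.
Proof.
move=> U0 a0; apply: nneseries_ge0 => k _ _; rewrite lee_fin.
exact/Psi_ge0/reach_ne.
Qed.

Lemma V_W {R : realType} {n m : nat} (f : 'rV[R]_n -> 'rV[R]_m -> 'rV[R]_n)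
  (U : set 'rV[R]_m) alpha : U !=set0 -> (forall z, 0 <= alpha z) ->
  V_infty f U alpha = W_1 f U alpha.
Proof.
move=> U0 a0; apply/seteqP; split => x; rewrite /V_infty /W_1 /Wfun /=;
have := @V_ge0 _ _ _ f U alpha x U0 a0; case: (Vfun f U alpha [set x]) => [v| |] //= _.
- by move=> _; change ((1 - expR (- v))%:E < 1%:E)%E; rewrite lte_fin gtrDl oppr_lt0 expR_gt0.
- by move=> _; rewrite ltry.
- by change ((((1 - 0 : R))%:E < 1%:E)%E -> false); rewrite subr0 ltxx.
Qed.

Lemma lam_cvg0 {R : realType} (lambda : R -> nat -> R) (r p : R) :
  0 < r -> 0 < p ->
  (forall s k, 0 <= s <= r -> 0 <= lambda s k) ->
  (\sum_(0 <= k <oo) ((lambda r k) `^ p)%:E < +oo)%E ->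
  (fun j => lambda r j) @ \oo --> 0.
Proof.
move=> r0 p0 l0 hS; apply: (@pow_cvg0 R _ p) => //.
  by move=> j; apply: l0; rewrite lexx ltW.
by apply: term0 => // k; apply: powR_ge0.
Qed.

Lemma incl1 (R : realType) (n m : nat) (N : 'rV[R]_n -> R)
  (f : 'rV[R]_n -> 'rV[R]_m -> 'rV[R]_n) (U : set 'rV[R]_m) (A : set 'rV[R]_n)
  (r M : R) (lambda : R -> nat -> R) (alpha : 'rV[R]_n -> R)
  (alpha_lo pbar : R) :
  (forall z, 0 <= N z) -> U !=set0 -> A !=set0 -> 0 < r -> 1 <= M ->
  (forall k s1 s2, 0 <= s1 -> s1 <= s2 -> s2 <= r -> lambda s1 k <= lambda s2 k) ->
  (fun j => lambda r j) @ \oo --> 0 ->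
  (forall x, setdist N x A <= r ->
     exists pi, admissible U pi /\
       forall k, setdist N (traj f x pi k) A <= M * lambda (setdist N x A) k) ->
  (forall x, 0 <= alpha x) -> 0 < alpha_lo -> 0 < pbar ->
  (forall x, alpha_lo * (setdist N x A) `^ pbar <= alpha x) ->
  V_infty f U alpha `<=` stab_domain N f U A.
Proof.
move=> N0 U0 A0 r0 M1 lmono lam0 stab a0 alo pb alb x Vx.
have Pcv := term0 (fun k => Psi alpha (reach f U [set x] k))
  (fun k => Psi_ge0 alpha _ a0 (reach_ne f U x k U0)) Vx.
have c0 : 0 < alpha_lo * r `^ pbar by rewrite mulr_gt0 // powR_gt0.
move/cvgrPdist_lt : Pcv => /(_ _ c0) [K _ HK].
have := HK K (leqnn K); rewrite /= sub0r normrN ger0_norm; last first.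
  exact: (Psi_ge0 alpha _ a0 (reach_ne f U x K U0)).
move=> hK.
have ne : [set alpha y | y in reach f U [set x] K] !=set0.
  by have [z rz] := reach_ne f U x K U0; exists (alpha z), z.
have [_ [z [x0 [pi [x0x adm ->]]] <-] az] := inf_lt ne hK.
move: x0x adm az; rewrite /= => -> adm az.
set y := traj f x pi K.
have dr : setdist N y A <= r.
  rewrite leNgt; apply/negP => rd.
  have : alpha_lo * r `^ pbar <= alpha y.
    apply: le_trans (alb y); rewrite ler_wpM2l ?(ltW alo) //.
    apply: ge0_ler_powR; rewrite ?nnegrE ?(ltW pb) ?(ltW r0) ?(ltW rd) //.
    exact: setdist_ge0.
  by rewrite leNgt az.
have [pi' [adm' Hpi']] := stab y dr.
exists (catpi pi pi' K); split; first exact: catpi_adm.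
rewrite -(cvg_shiftn K) /=.
apply: (@squeeze_cvgr _ _ _ _ (cst 0) (fun j => M * lambda r j)).
- apply: nearW => j; rewrite /= addnC traj_cat setdist_ge0 //=.
  apply: le_trans (Hpi' j) _; rewrite ler_wpM2l ?(le_trans ler01 M1) //.
  by apply: lmono => //; exact: setdist_ge0.
- exact: cvg_cst.
- rewrite -(mulr0 M); apply: cvgM => //; exact: cvg_cst.
Qed.

Lemma incl2 (R : realType) (n m : nat) (N : 'rV[R]_n -> R)
  (f : 'rV[R]_n -> 'rV[R]_m -> 'rV[R]_n) (U : set 'rV[R]_m) (A : set 'rV[R]_n)
  (r M p : R) (lambda : R -> nat -> R) (alpha : 'rV[R]_n -> R)
  (alpha_hi pbar : R) :
  (forall z, 0 <= N z) -> U !=set0 -> A !=set0 -> 0 < r -> 1 <= M -> 0 < p ->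
  (forall k s1 s2, 0 <= s1 -> s1 <= s2 -> s2 <= r -> lambda s1 k <= lambda s2 k) ->
  (forall s k, 0 <= s <= r -> 0 <= lambda s k) ->
  (forall s k1 k2, 0 <= s <= r -> (k1 <= k2)%N -> lambda s k2 <= lambda s k1) ->
  (\sum_(0 <= k <oo) ((lambda r k) `^ p)%:E < +oo)%E ->
  (forall x, setdist N x A <= r ->
     exists pi, admissible U pi /\
       forall k, setdist N (traj f x pi k) A <= M * lambda (setdist N x A) k) ->
  (forall x, 0 <= alpha x) -> 0 < alpha_hi -> p <= pbar ->
  (forall x, alpha x <= alpha_hi * (setdist N x A) `^ pbar) ->
  stab_domain N f U A `<=` V_infty f U alpha.
Proof.
move=> N0 U0 A0 r0 M1 p0 lmono l0 ldec hS stab a0 ahi ppb aub x [pi [adm cv]].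
have M0 : 0 < M by apply: lt_le_trans M1.
have lam0 := lam_cvg0 lambda r p r0 p0 l0 hS.
move/cvgrPdist_lt : (cv) => /(_ _ r0) [K _ HK].
have := HK K (leqnn K); rewrite /= sub0r normrN ger0_norm; last first.
  exact: setdist_ge0.
move=> hK; set y := traj f x pi K.
have [pi' [adm' Hpi']] := stab y (ltW hK).
have iM0 : 0 < M^-1 by rewrite invr_gt0.
move/cvgrPdist_lt : lam0 => /(_ _ iM0) [J _ HJ].
have lr i : 0 <= lambda r i by apply: l0; rewrite lexx ltW.
have tle1 i : (J <= i)%N -> M * lambda r i <= 1.
  move=> Ji; have := HJ i Ji; rewrite /= sub0r normrN ger0_norm // => h.
  by rewrite -(mulfV (lt0r_neq0 M0)) ler_wpM2l ?(ltW M0) ?(ltW h).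
set c := alpha_hi * M `^ p.
have c0 : 0 <= c by rewrite mulr_ge0 ?powR_ge0 ?(ltW ahi).
have bnd i : ((Psi alpha (reach f U [set x] (i + (K + J))))%:E <=
   c%:E * (lambda r i `^ p)%:E)%E.
  rewrite -EFinM lee_fin.
  apply: le_trans (Psi_le alpha (reach f U [set x] (i + (K + J)))
     (traj f x (catpi pi pi' K) (i + (K + J))) a0 _) _.
    by exists x, (catpi pi pi' K); split => //; exact: catpi_adm.
  rewrite (_ : (i + (K + J) = K + (i + J))%N); last by rewrite addnCA.
  rewrite traj_cat -/y.
  set z := traj f y pi' (i + J).
  set t := M * lambda r (i + J).
  have t0 : 0 <= t by rewrite mulr_ge0 ?(ltW M0).
  have t1 : t <= 1 by apply: tle1; rewrite leq_addl.
  have dz : setdist N z A <= t.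
    apply: le_trans (Hpi' _) _; rewrite ler_wpM2l ?(ltW M0) //.
    by apply: lmono => //; [exact: setdist_ge0 | exact: ltW].
  apply: le_trans (aub z) _; rewrite /c -mulrA ler_wpM2l ?(ltW ahi) //.
  have pb0 : 0 < pbar by apply: lt_le_trans ppb.
  apply: (@le_trans _ _ (t `^ pbar)).
    apply: ge0_ler_powR; rewrite ?nnegrE ?(ltW pb0) //; exact: setdist_ge0.
  apply: le_trans (pow_le_small _ _ _ t0 t1 p0 ppb) _.
  rewrite /t powRM ?(ltW M0) // ler_wpM2l ?powR_ge0 //.
  apply: ge0_ler_powR; rewrite ?nnegrE ?(ltW p0) ?lr //.
  by apply: ldec; [rewrite lexx ltW | rewrite leq_addr].
have Sfin : (\sum_(0 <= k <oo) ((lambda r k) `^ p)%:E)%E \is a fin_num.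
  by rewrite ge0_fin_numE // nneseries_ge0 // => k _ _; rewrite lee_fin powR_ge0.
rewrite /V_infty /= /Vfun (nneseries_split 0 (K + J)); last first.
  by move=> k _; rewrite lee_fin; exact: (Psi_ge0 alpha _ a0 (reach_ne f U x k U0)).
rewrite add0n -nneseries_addn; last first.
  by move=> k; rewrite lee_fin; exact: (Psi_ge0 alpha _ a0 (reach_ne f U x _ U0)).
apply: le_lt_trans.
  apply: leeD2l; apply: lee_nneseries; last by move=> k _; exact: bnd.
  by move=> k _ _; rewrite lee_fin; exact: (Psi_ge0 alpha _ a0 (reach_ne f U x _ U0)).
rewrite nneseriesZl; last by move=> k _; rewrite lee_fin powR_ge0.
by rewrite sumEFin -(fineK Sfin) -EFinM -EFinD ltry.
Qed.

Theorem theorem2 (R : realType) (n m : nat) (N : 'rV[R]_n -> R)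
  (f : 'rV[R]_n -> 'rV[R]_m -> 'rV[R]_n) (U : set 'rV[R]_m) (A : set 'rV[R]_n)
  (r M p : R) (lambda : R -> nat -> R) (alpha : 'rV[R]_n -> R)
  (alpha_lo alpha_hi pbar : R) :
  is_norm N ->
  continuous (fun z : 'rV[R]_n * 'rV[R]_m => f z.1 z.2) ->
  compact U -> U !=set0 ->
  compact A -> A !=set0 ->
  (forall x, A x -> exists2 u, U u & A (f x u)) ->
  (* local l_p-stabilizability *)
  0 < r -> 1 <= M -> 0 < p ->
  (forall k, {within `[0, r], continuous (fun s => lambda s k)}) ->
  (forall k s1 s2, 0 <= s1 -> s1 <= s2 -> s2 <= r -> lambda s1 k <= lambda s2 k) ->
  (forall k, lambda 0 k = 0) ->
  (forall s k, 0 <= s <= r -> 0 <= lambda s k) ->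
  (forall s k1 k2, 0 <= s <= r -> (k1 <= k2)%N -> lambda s k2 <= lambda s k1) ->
  (forall s, 0 <= s <= r -> lambda s 0 <= s) ->
  (\sum_(0 <= k <oo) ((lambda r k) `^ p)%:E < +oo)%E ->
  (forall x, setdist N x A <= r ->
     exists pi, admissible U pi /\
       forall k, setdist N (traj f x pi k) A <= M * lambda (setdist N x A) k) ->
  (* alpha *)
  continuous alpha ->
  (forall x, 0 <= alpha x) ->
  0 < alpha_lo -> 0 < alpha_hi -> p <= pbar ->
  (forall x, alpha_lo * (setdist N x A) `^ pbar <= alpha x /\
             alpha x <= alpha_hi * (setdist N x A) `^ pbar) ->
  V_infty f U alpha = W_1 f U alpha /\ W_1 f U alpha = stab_domain N f U A.
Proof.
move=> [N0 _ _ _] _ _ U0 _ A0 _ r0 M1 p0 _ lmono lam00 l0 ldec _ hS stab _ a0 alo ahi ppb ab.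
have VW := V_W f U alpha U0 a0.
split => //; rewrite -VW.
have pb0 : 0 < pbar by apply: lt_le_trans ppb.
apply/seteqP; split.
- apply: (@incl1 R n m N f U A r M lambda alpha alpha_lo pbar) => //.
  + exact: (lam_cvg0 lambda r p r0 p0 l0 hS).
  + by move=> x; case: (ab x).
- apply: (@incl2 R n m N f U A r M p lambda alpha alpha_hi pbar) => //.
  + by move=> x; case: (ab x).
Qed.
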